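(* Every connected infinite graph $G$ with uniformly bounded vertex degrees and finite asymptotic dimension is weighted hyperfinite.
   Context: A graph $G$ has asymptotic dimension at most $d$ (finite $d$) if for every $r>0$ there is $R=R(r)$ and vertex-disjoint induced subgraphs $\mathcal U_1,\dots,\mathcal U_d$ of $G$ covering $V(G)$ such that for each $i$, each connected component of $\mathcal U_i$ has diameter at most $R$ and any two distinct components of $\mathcal U_i$ are at distance at least $r$ in $G$. A connected infinite bounded-degree graph $G$ is weighted hyperfinite if for every $\epsilon>0$ there is $K_\epsilon>0$ such that for every finite induced subgraph $L\subseteq G$ and every $w:V(L)\to[0,\infty)$ there is $M\subseteq V(L)$ with $\sum_{x\in M}w(x)\le\epsilon\sum_{x\in V(L)}w(x)$ such that every connected component of $L$ with $M$ deleted has at most $K_\epsilon$ vertices. *)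

(* Defs.v *)
From Stdlib Require Import Reals List Arith.
Import ListNotations.
Open Scope R_scope.

Section Graphs.
Variable V : Type.
Variable adj : V -> V -> Prop.

Inductive walk_in (P : V -> Prop) : nat -> V -> V -> Prop :=
| walk_nil x : P x -> walk_in P 0 x x
| walk_cons n x y z : P x -> adj x y -> walk_in P n y z -> walk_in P (S n) x z.

Definition walk (n : nat) (x y : V) : Prop := walk_in (fun _ => True) n x y.

Definition simple_graph : Prop :=
  (forall x y, adj x y -> adj y x) /\ (forall x, ~ adj x x).

Definition connected_graph : Prop := forall x y, exists n, walk n x y.

Definition infinite_graph : Prop := ~ exists l : list V, forall v, In v l.

Definition degree_bounded_by (D : nat) : Prop :=
  forall v (l : list V), NoDup l -> (forall w, In w l -> adj v w) ->
    (length l <= D)%nat.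

Definition bounded_degree : Prop := exists D, degree_bounded_by D.

Definition dist_le (x y : V) (n : nat) : Prop := exists m, (m <= n)%nat /\ walk m x y.

(* Asymptotic dimension at most d: for every r > 0 there are R and a partition
   of V(G) into d classes U_0..U_{d-1} (col v = i  <->  v in U_i) such that
   each component of G[U_i] has (G-)diameter <= R, and any two vertices in
   distinct components of G[U_i] are at G-distance >= r. *)
Definition asdim_at_most (d : nat) : Prop :=
  forall r : nat, (0 < r)%nat ->
  exists (R : nat) (col : V -> nat),
    (forall v, (col v < d)%nat) /\
    forall i,
      (forall x y, col x = i -> col y = i ->
         (exists n, walk_in (fun v => col v = i) n x y) -> dist_le x y R) /\
      (forall x y, col x = i -> col y = i ->
         ~ (exists n, walk_in (fun v => col v = i) n x y) ->
         forall n, walk n x y -> (r <= n)%nat).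

Definition finite_asdim : Prop := exists d : nat, asdim_at_most d.

Definition sumw (w : V -> R) (l : list V) : R := fold_right Rplus 0 (map w l).

(* A finite induced subgraph L is given by a
   duplicate-free list l of its vertices; M is a duplicate-free sublist m.
   The component in L - M of a vertex x consists of the y reachable from x by a
   walk inside V(L) \ M; it must have at most K vertices. *)
Definition weighted_hyperfinite : Prop :=
  forall eps : R, 0 < eps ->
  exists K : nat, (0 < K)%nat /\
  forall (l : list V) (w : V -> R), NoDup l ->
    (forall x, In x l -> 0 <= w x) ->
    exists m : list V, NoDup m /\ incl m l /\
      sumw w m <= eps * sumw w l /\
      forall x, In x l -> ~ In x m ->
      forall c : list V, NoDup c ->
        (forall y, In y c -> exists n,
            walk_in (fun v => In v l /\ ~ In v m) n x y) ->
        (length c <= K)%nat.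

End Graphs.

(* Main.v *)
Require Import Defs.
From Stdlib Require Import Reals List Arith.
From Stdlib Require Import Lia Lra ClassicalEpsilon Classical.
Import ListNotations.
Open Scope R_scope.

Lemma walk_in_start {V} {adj : V -> V -> Prop} P n a b :
  walk_in V adj P n a b -> P a.
Proof. intros H; destruct H; auto. Qed.

Lemma walk_in_app {V} {adj : V -> V -> Prop} P n m a b c :
  walk_in V adj P n a b -> walk_in V adj P m b c -> walk_in V adj P (n+m) a c.
Proof. intros H; induction H; intros H2; simpl; auto. econstructor; eauto. Qed.

Lemma walk_in_rev {V} {adj : V -> V -> Prop} P n a b :
  (forall x y, adj x y -> adj y x) ->
  walk_in V adj P n a b -> walk_in V adj P n b a.
Proof.
  intros Hs H; induction H.
  - constructor; auto.
  - replace (S n) with (n + 1)%nat by lia.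
    apply walk_in_app with y; auto.
    econstructor; [eapply walk_in_start; eauto| apply Hs; auto| constructor; auto]; auto.
Qed.

Lemma walk_in_mono {V} {adj : V -> V -> Prop} (P Q : V -> Prop) n a b :
  (forall v, P v -> Q v) -> walk_in V adj P n a b -> walk_in V adj Q n a b.
Proof. intros HPQ H; induction H; econstructor; eauto. Qed.

Lemma dist_le_mono {V} {adj : V -> V -> Prop} x y n m :
  (n <= m)%nat -> dist_le V adj x y n -> dist_le V adj x y m.
Proof. intros H [k [Hk Hw]]; exists k; split; [lia|auto]. Qed.

Lemma dist_le_trans {V} {adj : V -> V -> Prop} x y z n m :
  dist_le V adj x y n -> dist_le V adj y z m -> dist_le V adj x z (n + m).
Proof.
  intros [k [Hk Hw]] [k' [Hk' Hw']]; exists (k + k')%nat; split; [lia|].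
  eapply walk_in_app; eauto.
Qed.

Lemma dist_le_sym {V} {adj : V -> V -> Prop} x y n :
  (forall x y, adj x y -> adj y x) ->
  dist_le V adj x y n -> dist_le V adj y x n.
Proof. intros Hs [k [Hk Hw]]; exists k; split; auto. apply walk_in_rev; auto. Qed.

Lemma nb_list {V} (adj : V -> V -> Prop) D : degree_bounded_by V adj D ->
  forall b, exists N : list V, (length N <= D)%nat /\ forall y, adj b y -> In y N.
Proof.
  intros HD b.
  set (P := fun k => exists l : list V, NoDup l /\ (forall w, In w l -> adj b w) /\ length l = k).
  assert (Hmax : forall n k, P k -> (D - k <= n)%nat ->
            exists k', P k' /\ forall k'', P k'' -> (k'' <= k')%nat).
  { induction n; intros k Pk Hk.
    - exists k; split; auto. intros k'' [l [Hn [Ha Hl]]]. pose proof (HD b l Hn Ha). lia.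
    - destruct (classic (exists k'', P k'' /\ (k < k'')%nat)) as [[k'' [Pk'' Hlt]]|Hno].
      + apply (IHn k''); auto. destruct Pk'' as [l [Hn [Ha Hl]]]. pose proof (HD b l Hn Ha). lia.
      + exists k; split; auto. intros k'' Pk''. destruct (le_lt_dec k'' k); auto.
        exfalso; apply Hno; eauto. }
  destruct (Hmax D 0%nat) as [k [[l [Hn [Ha Hl]]] Hm]].
  { exists nil; repeat split; auto; [constructor | intros w []]. }
  { lia. }
  exists l; split. { exact (HD b l Hn Ha). }
  intros y Hy. apply NNPP; intro Hni.
  assert (HP : P (S k)).
  { exists (y :: l); repeat split. constructor; auto. intros w [<-|Hw]; auto. simpl; lia. }
  apply Hm in HP; lia.
Qed.

Lemma nbs_list {V} (adj : V -> V -> Prop) D : degree_bounded_by V adj D ->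
  forall B : list V, exists N, (length N <= D * length B)%nat /\
     forall b y, In b B -> adj b y -> In y N.
Proof.
  intros HD B; induction B as [|b B IH].
  - exists nil; simpl; split; [lia| intros _ _ []].
  - destruct IH as [N [HN HNi]]. destruct (nb_list adj D HD b) as [N1 [HN1 HN1i]].
    exists (N1 ++ N); split.
    + rewrite length_app; simpl; rewrite Nat.mul_succ_r; lia.
    + intros b' y [<-|Hb] Ha; apply in_or_app; [left|right]; eauto.
Qed.

Lemma ball_list {V} (adj : V -> V -> Prop) D : simple_graph V adj -> degree_bounded_by V adj D ->
  forall x n, exists B : list V, (length B <= (S D) ^ n)%nat /\
     forall y m, (m <= n)%nat -> walk V adj m y x -> In y B.
Proof.
  intros [Hs _] HD x n; induction n.
  - exists [x]; split; [simpl; lia|]. intros y m Hm Hw. assert (m = 0%nat) by lia; subst.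
    inversion Hw; subst; simpl; auto.
  - destruct IHn as [B [HB HBi]]. destruct (nbs_list adj D HD B) as [N [HN HNi]].
    exists (B ++ N); split.
    + rewrite length_app. simpl. nia.
    + intros y m Hm Hw. apply in_or_app. destruct (le_lt_dec m n). { left; eauto. }
      right. assert (m = S n) by lia; subst. inversion Hw; subst.
      eapply HNi; [eapply HBi; [|eauto]; lia| apply Hs; eauto].
Qed.

Fixpoint sumr (f : nat -> R) (n : nat) : R :=
  match n with O => 0 | S n => sumr f n + f n end.

Lemma sumr_le f g n : (forall k, (k < n)%nat -> f k <= g k) -> sumr f n <= sumr g n.
Proof.
  induction n; simpl; intros H. lra.
  assert (f n <= g n) by (apply H; lia).
  assert (sumr f n <= sumr g n) by (apply IHn; intros; apply H; lia). lra.
Qed.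

Lemma sumr_ext f g n : (forall k, f k = g k) -> sumr f n = sumr g n.
Proof. intros H; induction n; simpl; auto. rewrite IHn, H; auto. Qed.

Lemma sumr_plus f g n : sumr (fun k => f k + g k) n = sumr f n + sumr g n.
Proof. induction n; simpl. lra. rewrite IHn; lra. Qed.

Lemma sumr_const c n : sumr (fun _ => c) n = INR n * c.
Proof. induction n; simpl sumr. simpl; lra. rewrite IHn, S_INR; lra. Qed.

Lemma sumr_scal c f n : sumr (fun k => c * f k) n = c * sumr f n.
Proof. induction n; simpl. lra. rewrite IHn; lra. Qed.

Lemma sumr_comm (f : nat -> nat -> R) n m :
  sumr (fun i => sumr (fun j => f i j) m) n = sumr (fun j => sumr (fun i => f i j) n) m.
Proof.
  induction n; simpl.
  - rewrite sumr_const; lra.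
  - rewrite IHn. rewrite <- sumr_plus. reflexivity.
Qed.

Lemma sumr_nonneg f n : (forall k, 0 <= f k) -> 0 <= sumr f n.
Proof. intros H; induction n; simpl. lra. specialize (H n); lra. Qed.

Definition ind (P : Prop) : R := if excluded_middle_informative P then 1 else 0.

Lemma ind_true P : P -> ind P = 1.
Proof. intros H; unfold ind; destruct (excluded_middle_informative P); tauto. Qed.
Lemma ind_false P : ~ P -> ind P = 0.
Proof. intros H; unfold ind; destruct (excluded_middle_informative P); tauto. Qed.
Lemma ind_ge0 P : 0 <= ind P.
Proof. unfold ind; destruct (excluded_middle_informative P); lra. Qed.

Lemma ind_exists (Q : nat -> Prop) d :
  ind (exists j, (j < d)%nat /\ Q j) <= sumr (fun j => ind (Q j)) d.
Proof.
  induction d; simpl.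
  - rewrite ind_false. lra. intros [j [Hj _]]; lia.
  - assert (Hs : 0 <= sumr (fun j => ind (Q j)) d) by (apply sumr_nonneg; intros; apply ind_ge0).
    destruct (classic (exists j, (j < S d)%nat /\ Q j)) as [[j [Hj Qj]]|Hn].
    + rewrite (ind_true _ (ex_intro _ j (conj Hj Qj))).
      destruct (Nat.eq_dec j d).
      * subst. rewrite (ind_true _ Qj). lra.
      * assert (Hex : exists j, (j<d)%nat /\ Q j) by (exists j; split; [lia|auto]).
        rewrite (ind_true _ Hex) in IHd. pose proof (ind_ge0 (Q d)); lra.
    + rewrite (ind_false _ Hn). pose proof (ind_ge0 (Q d)); lra.
Qed.

Lemma sumr_disj (P : nat -> Prop) T :
  (forall a b, P a -> P b -> a = b) -> sumr (fun k => ind (P k)) T <= 1.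
Proof.
  intros Hd; induction T; simpl. lra.
  destruct (classic (P T)) as [HT|HT].
  - rewrite (ind_true _ HT).
    assert (sumr (fun k => ind (P k)) T <= sumr (fun _ => 0) T).
    { apply sumr_le; intros k Hk. rewrite ind_false. lra. intros Pk.
      specialize (Hd _ _ Pk HT); lia. }
    rewrite sumr_const in H. lra.
  - rewrite (ind_false _ HT). lra.
Qed.

Lemma sumw_nonneg {V} (w : V -> R) l : (forall y, In y l -> 0 <= w y) -> 0 <= sumw V w l.
Proof.
  induction l as [|y l IH]; intros H; unfold sumw; simpl. lra.
  fold (sumw V w l). assert (0 <= w y) by (apply H; left; auto).
  assert (0 <= sumw V w l) by (apply IH; intros; apply H; right; auto). lra.
Qed.

Lemma sum_filter_bound {V} (w : V -> R) (p : nat -> V -> bool) T c (l : list V) :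
  (forall y, In y l -> 0 <= w y) ->
  (forall y, In y l -> sumr (fun k => if p k y then 1 else 0) T <= c) ->
  sumr (fun k => sumw V w (filter (p k) l)) T <= c * sumw V w l.
Proof.
  induction l as [|y l IH]; intros Hw Hc.
  - rewrite (sumr_ext _ (fun _ => 0)) by (intros; reflexivity).
    rewrite sumr_const. unfold sumw; simpl. lra.
  - rewrite (sumr_ext _ (fun k => (if p k y then w y else 0) + sumw V w (filter (p k) l))).
    2:{ intros k; unfold sumw; simpl; destruct (p k y); simpl; ring. }
    rewrite sumr_plus.
    rewrite (sumr_ext _ (fun k => w y * (if p k y then 1 else 0)))
      by (intros k; destruct (p k y); ring).
    rewrite sumr_scal.
    replace (sumw V w (y :: l)) with (w y + sumw V w l) by reflexivity.
    assert (Hy : 0 <= w y) by (apply Hw; left; auto).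
    assert (Hcy := Hc y (or_introl eq_refl)).
    assert (H1 : w y * sumr (fun k => if p k y then 1 else 0) T <= w y * c)
      by (apply Rmult_le_compat_l; auto).
    assert (H2 := IH (fun z Hz => Hw z (or_intror Hz)) (fun z Hz => Hc z (or_intror Hz))).
    lra.
Qed.

Lemma pigeon (f : nat -> R) T c : (0 < T)%nat -> sumr f T <= INR T * c ->
  exists k, (k < T)%nat /\ f k <= c.
Proof.
  intros HT Hs. apply NNPP; intro Hn.
  assert (Hall : forall k, (k < T)%nat -> c < f k).
  { intros k Hk. apply Rnot_le_lt. intro. apply Hn; eauto. }
  destruct T as [|T]; [lia|]. change (sumr f (S T)) with (sumr f T + f T) in Hs.
  assert (sumr (fun _ => c) T <= sumr f T) by (apply sumr_le; intros; left; apply Hall; lia).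
  rewrite sumr_const in H. assert (c < f T) by (apply Hall; lia).
  rewrite S_INR in Hs. lra.
Qed.

Theorem mainTheorem6 (V : Type) (adj : V -> V -> Prop) :
  simple_graph V adj ->
  connected_graph V adj ->
  infinite_graph V ->
  bounded_degree V adj ->
  finite_asdim V adj ->
  weighted_hyperfinite V adj.
Proof.
  intros Hsg Hconn Hinf [D HD] [d Hd] eps Heps.
  destruct Hsg as [Hsym Hirr].
  destruct (INR_archimed eps (INR d) Heps) as [T0 HT0].
  set (T := S T0).
  assert (HTd : INR d < eps * INR T).
  { unfold T. rewrite S_INR. lra. }
  assert (HTpos : 0 < INR T) by (unfold T; rewrite S_INR; pose proof (pos_INR T0); lra).
  destruct (Hd (2 * T)%nat) as [R0 [col [Hcol Hcl]]]. { unfold T; lia. }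
  set (Lay := fun j k y => (exists u, col u = j /\ dist_le V adj y u (S k)) /\
                            ~ (exists u, col u = j /\ dist_le V adj y u k)).
  set (Sp := fun k y => exists j, (j < d)%nat /\ Lay j k y).
  set (pb := fun k y => if excluded_middle_informative (Sp k y) then true else false).
  exists ((S D) ^ (R0 + T))%nat. split.
  { pose proof (Nat.pow_nonzero (S D) (R0 + T)); lia. }
  intros l w Hnd Hw.
  set (W := sumw V w l).
  assert (HW : 0 <= W) by (apply sumw_nonneg; auto).
  assert (Hsum : sumr (fun k => sumw V w (filter (pb k) l)) T <= INR d * W).
  { apply sum_filter_bound; auto. intros y _.
    apply Rle_trans with (sumr (fun k => sumr (fun j => ind (Lay j k y)) d) T).
    { apply sumr_le; intros k _.
      replace (if pb k y then 1 else 0) with (ind (Sp k y))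
        by (unfold pb, ind; destruct (excluded_middle_informative _); reflexivity).
      apply ind_exists. }
    rewrite sumr_comm. apply Rle_trans with (sumr (fun _ => 1) d).
    { apply sumr_le; intros j _. apply sumr_disj.
      intros a b [[u [Hu Hdu]] Hna] [[u' [Hu' Hdu']] Hnb].
      destruct (lt_eq_lt_dec a b) as [[Hab|Hab]|Hab]; auto.
      - exfalso; apply Hnb. exists u; split; auto. eapply dist_le_mono; [|eauto]; lia.
      - exfalso; apply Hna. exists u'; split; auto. eapply dist_le_mono; [|eauto]; lia. }
    rewrite sumr_const; lra. }
  destruct (pigeon (fun k => sumw V w (filter (pb k) l)) T (INR d * W / INR T)) as [k [Hk Hfk]].
  { unfold T; lia. }
  { replace (INR T * (INR d * W / INR T)) with (INR d * W) by (field; lra). auto. }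
  exists (filter (pb k) l). split; [|split; [|split]].
  - apply NoDup_filter; auto.
  - intros y Hy; apply filter_In in Hy; tauto.
  - simpl in Hfk. apply Rle_trans with (1 := Hfk).
    assert (H1 : INR d * W <= eps * INR T * W) by (apply Rmult_le_compat_r; lra).
    replace (eps * W) with (eps * INR T * W / INR T) by (field; lra).
    unfold Rdiv. apply Rmult_le_compat_r; auto. left; apply Rinv_0_lt_compat; auto.
  - intros x Hxl Hxm c Hc Hreach.
    set (I := fun y => exists c', col c' = col x /\
                (exists n, walk_in V adj (fun v => col v = col x) n x c') /\
                dist_le V adj y c' k).
    assert (Hstep : forall a b, I a -> adj a b -> In b l /\ ~ In b (filter (pb k) l) -> I b).
    { intros a b [c' [Hc' [Hcn Hd']]] Hab [Hbl Hbm].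
      assert (Hbc : dist_le V adj b c' (1 + k)).
      { apply dist_le_trans with a; auto. exists 1%nat; split; auto.
        unfold walk; econstructor; [exact Logic.I| apply Hsym; exact Hab| constructor; exact Logic.I]. }
      assert (HnS : ~ Sp k b).
      { intro HS; apply Hbm; apply filter_In; split; auto. unfold pb.
        destruct (excluded_middle_informative _); tauto. }
      assert (Hnl : ~ Lay (col x) k b).
      { intro HL; apply HnS; exists (col x); split; auto. }
      assert (Hu : exists u, col u = col x /\ dist_le V adj b u k).
      { apply NNPP; intro Hn; apply Hnl; split; auto. exists c'; split; auto. }
      destruct Hu as [u [Hu Hbu]]. exists u; split; auto; split; auto.
      assert (Hcu : exists n, walk_in V adj (fun v => col v = col x) n c' u).
      { apply NNPP; intro Hnc.
        assert (Hdcu : dist_le V adj c' u ((1 + k) + k)).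
        { apply dist_le_trans with b; auto. apply dist_le_sym; auto. }
        destruct Hdcu as [m [Hm Hwm]].
        pose proof (proj2 (Hcl (col x)) c' u Hc' Hu Hnc m Hwm). lia. }
      destruct Hcn as [n1 Hn1]; destruct Hcu as [n2 Hn2].
      exists (n1 + n2)%nat; eapply walk_in_app; eauto. }
    assert (Hinv : forall n a b, walk_in V adj (fun v => In v l /\ ~ In v (filter (pb k) l)) n a b ->
                     I a -> I b).
    { intros n a b Hw'; induction Hw'; auto. intros HI. apply IHHw'.
      apply (Hstep x0 y HI H0). exact (walk_in_start _ _ _ _ Hw'). }
    assert (Hball : forall y, I y -> dist_le V adj y x (R0 + T)).
    { intros y [c' [Hc' [[n Hn] Hd']]].
      assert (Hxc : dist_le V adj x c' R0).
      { apply (proj1 (Hcl (col x))); eauto. }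
      apply dist_le_mono with (k + R0)%nat; [lia|].
      apply dist_le_trans with c'; auto. apply dist_le_sym; auto. }
    assert (HIx : I x).
    { exists x; split; auto; split. exists 0%nat; constructor; auto.
      exists 0%nat; split; [lia| constructor; exact Logic.I]. }
    destruct (ball_list adj D (conj Hsym Hirr) HD x (R0 + T)) as [B [HB HBi]].
    apply Nat.le_trans with (length B); auto.
    apply NoDup_incl_length; auto.
    intros y Hy. destruct (Hreach y Hy) as [n Hn].
    destruct (Hball y (Hinv _ _ _ Hn HIx)) as [m [Hm Hwm]].
    eapply HBi; eauto.
Qed.
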